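(* Let $D\ge 2$, $\eta=\mathrm{diag}(-1,1,\dots,1)$, and let $g_{\mu\nu}$, $f_{\mu\nu}$ be real symmetric invertible $D\times D$ matrices of Lorentzian signature $(-,+,\dots,+)$, with inverses $g^{\mu\nu}$, $f^{\mu\nu}$. Then there exist real matrices $e_A{}^\mu$ and $L^B{}_\nu$ with $\eta^{AB}e_A{}^\mu e_B{}^\nu=g^{\mu\nu}$ and $\eta_{AB}L^A{}_\mu L^B{}_\nu=f_{\mu\nu}$ such that $e_A{}^\mu L_{B\mu}=e_B{}^\mu L_{A\mu}$ for all $A,B$, if and only if there exists a real matrix $\gamma$ such that (i) $\gamma^\mu{}_\rho\gamma^\rho{}_\nu=g^{\mu\rho}f_{\rho\nu}$ (i.e. $\gamma^2=g^{-1}f$), and (ii) the matrix $f\gamma$ is symmetric.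
   Context: Greek indices are space-time indices and capital Latin indices are Lorentz indices, lowered and raised with $\eta_{AB}$ and $\eta^{AB}$ (so $L_{B\mu}=\eta_{BC}L^C{}_\mu$); repeated indices are summed. *)

(* Defs.v *)
From mathcomp Require Import all_boot all_order all_algebra.
From mathcomp Require Import reals.
Set Implicit Arguments. Unset Strict Implicit. Unset Printing Implicit Defensive.
Import Order.TTheory GRing.Theory Num.Theory.
Local Open Scope ring_scope.

Definition eta {R : realType} (n : nat) : 'M[R]_n :=
  \matrix_(i, j) ((i == j)%:R * (if (i : nat) == 0%N then -1 else 1)).

(* A real symmetric matrix has Lorentzian signature (-,+,...,+) iff it is
   congruent to eta (Sylvester's law of inertia). *)
Definition lorentzian {R : realType} (n : nat) (g : 'M[R]_n) : Prop :=
  g^T = g /\ exists P : 'M[R]_n, P \in unitmx /\ P^T *m g *m P = eta n.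

(* Main.v *)
Require Import Defs.
From mathcomp Require Import all_boot all_order all_algebra.
From mathcomp Require Import reals.
Import Order.TTheory GRing.Theory Num.Theory.
Local Open Scope ring_scope.

Lemma eta_tr (R : realType) n : (eta n : 'M[R]_n)^T = eta n.
Proof.
apply/matrixP => i j; rewrite !mxE eq_sym.
by case: eqP => [->|]; rewrite ?mul0r.
Qed.

Lemma eta_sq (R : realType) n : (eta n : 'M[R]_n) *m eta n = 1%:M.
Proof.
apply/matrixP => i j; rewrite !mxE (bigD1 i) //= big1 ?addr0.
  rewrite !mxE eqxx mul1r. case: (i == j); rewrite ?mul0r ?mulr0 ?mul1r //.
  by case: ifP; rewrite ?mulrNN ?mulr1.
by move=> k /negPf nk; rewrite !mxE eq_sym nk mul0r mul0r.
Qed.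

Theorem proposition3 (R : realType) (D : nat) (hD : (2 <= D)%N)
    (g f : 'M[R]_D)
    (hg : g \in unitmx) (hf : f \in unitmx)
    (hgL : lorentzian g) (hfL : lorentzian f) :
  (exists e L : 'M[R]_D,
      e^T *m eta D *m e = invmx g /\
      L^T *m eta D *m L = f /\
      (e *m L^T *m eta D)^T = e *m L^T *m eta D)
  <->
  (exists gam : 'M[R]_D,
      gam *m gam = invmx g *m f /\
      (f *m gam)^T = f *m gam).
Proof.
split.
  move=> [e [L [H1 [H2 H3]]]].
  have HM : eta D *m (L *m e^T) = e *m L^T *m eta D.
    by rewrite -H3 !trmx_mul trmxK eta_tr.
  have HLe : L *m e^T = eta D *m (e *m L^T *m eta D).
    by rewrite -HM mulmxA eta_sq mul1mx.
  exists (e^T *m L); split.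
    by rewrite -H1 -H2 mulmxA -(mulmxA e^T L) HLe !mulmxA.
  have E : f *m (e^T *m L) = L^T *m (e *m L^T *m eta D) *m L.
    by rewrite -H2 -HM !mulmxA.
  have T : forall A B : 'M[R]_D, (A^T *m B *m A)^T = A^T *m B^T *m A.
    by move=> A B; rewrite !trmx_mul trmxK mulmxA.
  by rewrite E T H3.
move=> [gam [Hg2 Hfg]].
case: hfL => fsym _.
case: hgL => gsym [P [HP HPg]].
have gu : gam *m gam \in unitmx by rewrite Hg2 unitmx_mul unitmx_inv hg hf.
have fE : f = g *m (gam *m gam) by rewrite Hg2 mulmxA mulmxV // mul1mx.
have Hsym : gam^T *m g = g *m gam.
  have E1 : gam^T *m g *m (gam *m gam) = g *m gam *m (gam *m gam).
    by rewrite -mulmxA -fE -fsym -trmx_mul Hfg fE !mulmxA.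
  by rewrite -[LHS]mulmx1 -(mulmxV gu) mulmxA E1 -(mulmxA _ (gam *m gam)) mulmxV // mulmx1.
have Pu : P \in unitmx := HP.
have Ptu : P^T \in unitmx by rewrite unitmx_tr.
have gE : g = invmx P^T *m eta D *m invmx P.
  by rewrite -HPg !mulmxA mulVmx // mul1mx -(mulmxA g) mulmxV // mulmx1.
have giE : invmx g = P *m eta D *m P^T.
  have X : P *m eta D *m P^T *m g = 1%:M.
    by rewrite gE !mulmxA -(mulmxA _ P^T) mulmxV // mulmx1 -(mulmxA P) eta_sq mulmx1 mulmxV.
  by rewrite -(mul1mx (invmx g)) -X -(mulmxA _ g) mulmxV // mulmx1.
exists P^T, (invmx P *m gam); split; [|split].
- by rewrite trmxK giE.
- by rewrite trmx_mul trmx_inv fE mulmxA -Hsym gE !mulmxA.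
- have gt : gam^T = g *m gam *m invmx g.
    by rewrite -Hsym -mulmxA mulmxV // mulmx1.
  rewrite !trmx_mul !trmxK eta_tr trmx_inv gt giE gE !mulmxA.
  rewrite mulmxV // mul1mx -(mulmxA _ P^T (invmx P^T)) mulmxV // mulmx1.
  by rewrite -(mulmxA _ (eta D) (eta D)) eta_sq mulmx1.
Qed.
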